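(* Let $g(n) = \frac{(\log n)^2}{n} f(n)$, let \[ L = \liminf_{k\to\infty} \frac{\log(R(k,k))}{k} \quad\text{and}\quad M = \limsup_{t\to\infty} \max_{1 \le s \le t} \frac{\log(R(s,t))}{\sqrt{st}}. \] Then \[ \liminf_{n\to\infty} g(n) \ge L^2 \quad\text{and}\quad \limsup_{n\to\infty} g(n) \ge M^2. \]
   Context: All logarithms are in base 2. For positive integers $s,t$, the Ramsey number $R(s,t)$ is the minimum $n$ such that every red/blue edge-coloring of the complete graph $K_n$ contains a red clique on $s$ vertices or a blue clique on $t$ vertices. For a graph $G$, $\chi(G)$ is its chromatic number and $\omega(G)$ its clique number. For $n \in \mathbb{N}$, $f(n)$ is the maximum of $\chi(G)/\omega(G)$ over all graphs $G$ on $n$ vertices. *)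

(* Defs.v *)
From HB Require Import structures.
From mathcomp Require Import all_boot all_order all_algebra.
From mathcomp Require Import boolp classical_sets reals ereal topology normedtype sequences exp.
Set Implicit Arguments. Unset Strict Implicit. Unset Printing Implicit Defensive.
Import Order.TTheory GRing.Theory Num.Theory.
Local Open Scope ring_scope.

Definition simple_graph n (E : {ffun 'I_n * 'I_n -> bool}) : bool :=
  [forall x, ~~ E (x, x)] && [forall x, forall y, E (x, y) == E (y, x)].

Definition colorable n (E : {ffun 'I_n * 'I_n -> bool}) (k : nat) : bool :=
  [exists c : {ffun 'I_n -> 'I_k}, [forall x, forall y, E (x, y) ==> (c x != c y)]].

(* chromatic number: least k <= n with a proper k-colouring (n colours always suffice) *)
Definition chromatic n (E : {ffun 'I_n * 'I_n -> bool}) : nat :=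
  \big[minn/n]_(k < n.+1 | colorable E k) k.

Definition is_clique n (E : {ffun 'I_n * 'I_n -> bool}) (S : {set 'I_n}) : bool :=
  [forall x in S, forall y in S, (x != y) ==> E (x, y)].

Definition clique_number n (E : {ffun 'I_n * 'I_n -> bool}) : nat :=
  \max_(S : {set 'I_n} | is_clique E S) #|S|.

Definition fchi (R : realType) (n : nat) : R :=
  \big[Num.max/0]_(E : {ffun 'I_n * 'I_n -> bool} | simple_graph E)
     ((chromatic E)%:R / (clique_number E)%:R).

(* Ramsey property: every red/blue colouring of the edges of K_n (colour of
   edge {x,y} is c (x,y) = c (y,x), true = red) has a red K_s or a blue K_t. *)
Definition ramsey_prop (s t n : nat) : bool :=
  [forall c : {ffun 'I_n * 'I_n -> bool},
    [forall x, forall y, c (x, y) == c (y, x)] ==>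
    [exists S : {set 'I_n},
      ((#|S| == s) && [forall x in S, forall y in S, (x != y) ==> c (x, y)])
      || ((#|S| == t) && [forall x in S, forall y in S, (x != y) ==> ~~ c (x, y)])]].

(* R(s,t): the least n with the Ramsey property (0 if none, which never happens) *)
Definition ramsey (s t : nat) : nat :=
  match pselect (exists n, ramsey_prop s t n) with
  | left h => ex_minn h
  | right _ => 0
  end.

Definition log2 (R : realType) (x : R) : R := ln x / ln 2.

Definition gfun (R : realType) (n : nat) : R :=
  (log2 (n%:R : R)) ^+ 2 / n%:R * fchi R n.

Definition Lconst (R : realType) : \bar R :=
  limn_einf (fun k : nat => (log2 ((ramsey k k)%:R : R) / k%:R)%:E).

Definition Mconst (R : realType) : \bar R :=
  limn_esup (fun t : nat =>
    (\big[Num.max/0]_(1 <= s < t.+1)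
       (log2 ((ramsey s t)%:R : R) / Num.sqrt ((s * t)%:R)))%:E).

(* Main.v *)
Require Import Defs.
From HB Require Import structures.
From mathcomp Require Import all_boot all_order all_algebra.
From mathcomp Require Import boolp classical_sets reals ereal topology normedtype sequences exp.
From mathcomp Require Import lra.
Import Order.TTheory GRing.Theory Num.Theory.

Module Aux.
Set Implicit Arguments. Unset Strict Implicit.
Lemma sub_card (T : finType) (S : {set T}) k : k <= #|S| ->
  exists2 U : {set T}, U \subset S & #|U| = k.
Proof.
elim: k => [|k IH] hk.
  by exists (@finset.set0 T); [apply: finset.sub0set | apply: finset.cards0].
have [U US cU] := IH (ltnW hk).
have : ~~ (S \subset U).
  apply/negP => /subset_leq_card; rewrite cU; by rewrite leqNgt hk.
case/subsetPn => x xS xU.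
exists (x |: U); first by rewrite finset.subUset finset.sub1set xS.
by rewrite cardsU1 xU cU.
Qed.

Definition is_indep n (E : {ffun 'I_n * 'I_n -> bool}) (S : {set 'I_n}) : bool :=
  [forall x in S, forall y in S, ~~ E (x, y)].

Lemma colorable_chromatic n (E : {ffun 'I_n * 'I_n -> bool}) :
  simple_graph E -> colorable E (chromatic E).
Proof.
move=> /andP[/forallP irr _].
rewrite /chromatic; apply: (big_ind (colorable E)) => //.
- apply/existsP; exists [ffun x => x]; apply/forallP => x; apply/forallP => y.
  apply/implyP => Exy; rewrite !ffunE; apply/eqP => xy; subst y.
  by move: (irr x); rewrite Exy.
- by move=> x y cx cy; rewrite /minn; case: ifP.
Qed.

Lemma chromatic_lb n (E : {ffun 'I_n * 'I_n -> bool}) b :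
  simple_graph E -> (forall S, is_indep E S -> #|S| <= b) -> n <= chromatic E * b.
Proof.
move=> sE hb; have /existsP[c /forallP hc] := colorable_chromatic sE.
set k := chromatic E.
have -> : n = \sum_(i : 'I_k) #|[set x | c x == i]|.
  rewrite -{1}(card_ord n) -sum1_card (partition_big c xpredT) //=.
  apply: eq_bigr => i _; rewrite -sum1_card; apply: eq_bigl => x.
  by rewrite inE.
rewrite -[k in k * b]card_ord -sum_nat_const.
apply: leq_sum => i _; apply: hb.
apply/forallP => x; apply/implyP; rewrite inE => /eqP cx.
apply/forallP => y; apply/implyP; rewrite inE => /eqP cy.
have := hc x; move=> /forallP /(_ y) /implyP H.
by apply/negP => /H; rewrite cx cy eqxx.
Qed.

Lemma clique_number_ub n (E : {ffun 'I_n * 'I_n -> bool}) a :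
  (forall S, is_clique E S -> #|S| <= a) -> clique_number E <= a.
Proof. by move=> h; apply/bigmax_leqP => S; apply: h. Qed.

Lemma clique_number_ge1 n (E : {ffun 'I_n * 'I_n -> bool}) (x : 'I_n) :
  1 <= clique_number E.
Proof.
have cl : is_clique E [set x].
  apply/forallP => y; apply/implyP; rewrite inE => /eqP->.
  apply/forallP => z; apply/implyP; rewrite inE => /eqP->.
  by rewrite eqxx.
by have := @leq_bigmax_cond _ (is_clique E) (fun S => #|S|) _ cl; rewrite cards1.
Qed.

Lemma fchi_lb (R : realType) n (E : {ffun 'I_n * 'I_n -> bool}) a b :
  simple_graph E -> 0 < n ->
  (forall S, is_clique E S -> #|S| <= a) ->
  (forall S, is_indep E S -> #|S| <= b) ->
  [/\ 0 < a, 0 < b & (n%:R / (a * b)%:R <= fchi R n)%R].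
Proof.
move=> sE n0 ha hb.
have x : 'I_n := Ordinal n0.
have w1 := clique_number_ge1 E x.
have wa := clique_number_ub ha.
have a0 : 0 < a by apply: leq_trans wa.
have b0 : 0 < b.
  have : #|[set x]| <= b.
    apply: hb; apply/forallP => y; apply/implyP; rewrite inE => /eqP->.
    apply/forallP => z; apply/implyP; rewrite inE => /eqP->.
    by case/andP: sE => /forallP ->.
  by rewrite cards1.
have chi := chromatic_lb sE hb.
split => //.
apply: (@le_trans _ _ ((chromatic E)%:R / (clique_number E)%:R)%R); last first.
  rewrite /fchi; apply: (le_bigmax_cond _ _ sE).
rewrite ler_pdivrMr ?ltr0n ?muln_gt0 ?a0 //.
rewrite mulrAC ler_pdivlMr ?ltr0n //.
rewrite -!natrM ler_nat.
apply: leq_trans (leq_mul chi wa) _.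
by rewrite -mulnA [b * a]mulnC.
Qed.
Lemma coloring_graph n s t : ~~ ramsey_prop s t n ->
  exists E : {ffun 'I_n * 'I_n -> bool}, [/\ simple_graph E,
    (forall S, is_clique E S -> #|S| < s) & (forall S, is_indep E S -> #|S| < t)].
Proof.
move=> /forallPn [c]; rewrite negb_imply => /andP [/forallP sym /existsPn noS].
exists [ffun p => (p.1 != p.2) && c p]; split.
- rewrite /simple_graph; apply/andP; split.
    by apply/forallP => x; rewrite ffunE /= eqxx.
  apply/forallP => x; apply/forallP => y; rewrite !ffunE /=.
  by move: (sym x) => /forallP /(_ y) /eqP ->; rewrite [y == x]eq_sym.
- move=> S cl; rewrite ltnNge; apply/negP => /sub_card [U US cU].
  move: (noS U); apply/negP; rewrite negbK; apply/orP; left; rewrite cU eqxx /=.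
  apply/forallP => x; apply/implyP => xU; apply/forallP => y; apply/implyP => yU.
  apply/implyP => xy.
  move/forallP: cl => /(_ x) /implyP /(_ (fintype.subsetP US x xU)) /forallP /(_ y).
  move=> /implyP /(_ (fintype.subsetP US y yU)) /implyP /(_ xy).
  by rewrite ffunE /= xy.
- move=> S cl; rewrite ltnNge; apply/negP => /sub_card [U US cU].
  move: (noS U); apply/negP; rewrite negbK; apply/orP; right; rewrite cU eqxx /=.
  apply/forallP => x; apply/implyP => xU; apply/forallP => y; apply/implyP => yU.
  apply/implyP => xy.
  move/forallP: cl => /(_ x) /implyP /(_ (fintype.subsetP US x xU)) /forallP /(_ y).
  move=> /implyP /(_ (fintype.subsetP US y yU)).
  by rewrite ffunE /= xy.
Qed.

Lemma all_blue s t n : 1 < s -> n < t -> ~~ ramsey_prop s t n.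
Proof.
move=> s1 nt; apply/forallPn; exists [ffun _ => false]; rewrite negb_imply.
apply/andP; split.
  by apply/forallP => x; apply/forallP => y; rewrite !ffunE.
apply/existsPn => S; rewrite negb_or; apply/andP; split.
- apply/negP => /andP [/eqP cS /forallP H].
  have : 1 < #|S| by rewrite cS.
  case/card_gt1P => x [y [xS yS xy]].
  move: (H x); rewrite xS /= => /forallP /(_ y).
  by rewrite yS xy /= ffunE.
- apply/negP => /andP [/eqP cS _].
  by have := max_card S; rewrite card_ord cS leqNgt nt.
Qed.

Lemma prop_1 t n : 0 < n -> ramsey_prop 1 t n.
Proof.
move=> n0; apply/forallP => c; apply/implyP => _; apply/existsP.
exists [set Ordinal n0]; rewrite cards1 eqxx /=; apply/orP; left.
apply/forallP => x; apply/implyP; rewrite inE => /eqP ->.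
apply/forallP => y; apply/implyP; rewrite inE => /eqP ->.
by rewrite eqxx.
Qed.

Lemma ramsey_le s t n : ramsey_prop s t n -> ramsey s t <= n.
Proof.
move=> h; rewrite /ramsey; case: pselect => [e|[]]; last by exists n.
by case: ex_minnP => m _ hm; apply: hm.
Qed.

Lemma ramsey_min s t n : n < ramsey s t -> ~~ ramsey_prop s t n.
Proof.
rewrite /ramsey; case: pselect => [e|_] //.
case: ex_minnP => m _ hm lt; apply/negP => /hm; by rewrite leqNgt lt.
Qed.

Lemma ramsey_prop_at s t : 0 < ramsey s t -> ramsey_prop s t (ramsey s t).
Proof. by rewrite /ramsey; case: pselect => [e|_] //; case: ex_minnP. Qed.

Section Real.
Variable R : realType.
Local Open Scope ring_scope.

Lemma ln2_gt0 : 0 < ln (2:R).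
Proof. by apply: ln_gt0; rewrite ltr1n. Qed.

Lemma log2_nat_ge0 m : 0 <= log2 (m%:R : R).
Proof.
rewrite /log2 divr_ge0 ?(ltW ln2_gt0) //.
case: m => [|m]; first by rewrite ln0.
by apply: ln_ge0; rewrite ler1n.
Qed.

Lemma log2_le (m n : nat) : (0 < m)%N -> (m <= n)%N -> log2 (m%:R : R) <= log2 n%:R.
Proof.
move=> m0 mn; rewrite /log2 ler_pM2r ?invr_gt0 ?ln2_gt0 //.
by rewrite ler_ln ?posrE ?ltr0n ?ler_nat //; apply: leq_trans mn.
Qed.

Lemma log2_exp2 m : log2 ((2 ^ m)%N%:R : R) = m%:R.
Proof.
rewrite /log2 natrX lnXn // -[ln 2 *+ m]mulr_natr mulrAC mulfV ?mul1r //.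
by rewrite gt_eqF // ln2_gt0.
Qed.

Lemma log2_succ n : (0 < n)%N -> log2 (n.+1%:R : R) <= log2 n%:R + 1.
Proof.
move=> n0; have h : (n.+1 <= n * 2)%N by rewrite muln2 -addnn -addn1 leq_add2l.
apply: (le_trans (log2_le _ h)) => //.
rewrite /log2 natrM lnM ?posrE ?ltr0n //.
by rewrite mulrDl mulfV //; rewrite gt_eqF // ln2_gt0.
Qed.

Lemma gfun_bound n (D x : R) : (0 < n)%N -> 0 < D -> n%:R / D <= fchi R n ->
  0 <= x -> x ^+ 2 * D <= log2 (n%:R : R) ^+ 2 -> x ^+ 2 <= gfun R n.
Proof.
move=> n0 D0 hF x0 hx; rewrite /gfun.
apply: (le_trans _ (ler_wpM2l _ hF)); last by rewrite divr_ge0 ?sqr_ge0 ?ler0n.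
rewrite mulrA divfK ?pnatr_eq0 -?lt0n // ler_pdivlMr //.
Qed.

Lemma part1 (a : R) N : 0 < a ->
  (forall k, (N <= k)%N -> a < log2 ((ramsey k k)%:R : R) / k%:R) ->
  exists N', forall n, (N' <= n)%N -> a ^+ 2 <= gfun R n.
Proof.
move=> a0 hN.
have [m hm] : exists m : nat, a * N%:R < m%:R.
  by exists (Num.trunc (a * N%:R)).+1; exact: truncnS_gt.
exists (2 ^ m)%N => n hn.
have n0 : (0 < n)%N by apply: leq_trans hn; rewrite expn_gt0.
have exk : exists j, ~~ ramsey_prop j.+1 j.+1 n.
  by exists n; apply: all_blue => //; rewrite ltnS.
case: (ex_minnP exk) => k nk kmin.
have [E [sE hcl hind]] := coloring_graph nk.
have [k0 _ hF] := fchi_lb R sE n0 (a:=k) (b:=k) (fun S h => hcl S h) (fun S h => hind S h).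
have pk : ramsey_prop k k n.
  case: k k0 nk kmin {hcl hind hF} => // k' _ _ kmin.
  apply/negPn/negP => h; have := kmin _ h; by rewrite ltnn.
have Rk := ramsey_le pk.
have akl : a * k%:R <= log2 (n%:R : R).
  case: (leqP N k) => Nk.
  - have := hN k Nk; rewrite ltr_pdivlMr ?ltr0n // => h.
    apply: (le_trans (ltW h)).
    case R0: (ramsey k k) => [|r].
      move: h; rewrite R0 /log2 ln0 // mul0r.
      have : 0 < a * k%:R by rewrite mulr_gt0 ?ltr0n.
      move=> ? ?; lra.
    by apply: log2_le => //; rewrite -R0.
  - apply: (le_trans _ (log2_le _ hn)); last by rewrite expn_gt0.
    rewrite log2_exp2.
    have : a * k%:R <= a * N%:R by rewrite ler_pM2l // ler_nat ltnW.
    move=> ?; lra.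
apply: (gfun_bound n0 _ hF (ltW a0)).
  by rewrite ltr0n muln_gt0 k0.
have ak0 : 0 <= a * k%:R by rewrite mulr_ge0 ?ler0n // ltW.
rewrite natrM !expr2; nra.
Qed.

Lemma part2 (b c : R) : 0 < b -> b < c ->
  (forall N, exists t s, (N <= t)%N /\ (1 <= s <= t)%N /\
     c * Num.sqrt ((s * t)%N%:R) < log2 ((ramsey s t)%:R : R)) ->
  forall N, exists n, (N <= n)%N /\ b ^+ 2 <= gfun R n.
Proof.
move=> b0 bc h N.
have [T0 hT0] : exists T0 : nat, 1 / (c - b) ^+ 2 < T0%:R.
  by exists (Num.trunc (1 / (c - b) ^+ 2)).+1; exact: truncnS_gt.
have [t [s [Tt [/andP [s1 st] hl]]]] := h (maxn N.+1 T0).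
have t1 : (0 < t)%N by apply: leq_trans st.
have st0 : (0 < s * t)%N by rewrite muln_gt0 s1 t1.
have sq0 : 0 < Num.sqrt ((s * t)%N%:R : R) by rewrite sqrtr_gt0 ltr0n.
have m2 : (1 < ramsey s t)%N.
  rewrite ltnNge; apply/negP => m1; move: hl.
  have -> : log2 ((ramsey s t)%:R : R) = 0.
    move: m1; case: (ramsey s t) => [|[|]] //= _.
    - by rewrite /log2 ln0 ?mul0r.
    - by rewrite /log2 ln1 ?mul0r.
  have := mulr_gt0 (lt_trans b0 bc) sq0; move=> ? ?; lra.
have hm := ramsey_prop_at (ltnW m2).
have s2 : (1 < s)%N.
  case: s s1 st st0 sq0 hl m2 hm {h} => [|[|s]] // _ _ _ _ _ m2 _.
  by have := ramsey_le (prop_1 t (isT : (0 < 1)%N)); rewrite leqNgt m2.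
have tm : (t <= ramsey s t)%N.
  by rewrite leqNgt; apply/negP => mt; move: (all_blue s2 mt); rewrite hm.
set m := ramsey s t in m2 hm tm hl.
have mn : m = m.-1.+1 by rewrite prednK // ltnW.
set n := m.-1 in mn.
have n0 : (0 < n)%N by rewrite -ltnS -mn.
have nprop : ~~ ramsey_prop s t n by apply: ramsey_min; rewrite -/m mn.
have [E [sE hcl hind]] := coloring_graph nprop.
have [a0 b0' hF] := fchi_lb R sE n0 (a:=s.-1) (b:=t.-1)
  (fun S H => ltac:(rewrite -ltnS prednK ?(ltnW s2) //; exact: hcl))
  (fun S H => ltac:(rewrite -ltnS prednK //; exact: hind)).
exists n; split.
  rewrite -ltnS -mn; apply: leq_trans tm; apply: leq_trans Tt; exact: leq_maxl.
apply: (gfun_bound n0 _ hF (ltW b0)).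
  by rewrite ltr0n muln_gt0 a0 b0'.
set q := Num.sqrt _ in sq0 hl.
set l := log2 (n%:R : R).
have l0 : 0 <= l by apply: log2_nat_ge0.
have H1 : c * q < l + 1.
  apply: (lt_le_trans hl); rewrite mn; exact: log2_succ.
have q2 : q ^+ 2 = (s * t)%N%:R by rewrite sqr_sqrtr ?ler0n.
have H2 : 1 < T0%:R * (c - b) ^+ 2.
  by move: hT0; rewrite ltr_pdivrMr // exprn_gt0 // subr_gt0.
have H3 : (T0%:R : R) <= q ^+ 2.
  rewrite q2 ler_nat; apply: leq_trans (leq_maxr N.+1 T0) _.
  apply: leq_trans Tt _; by rewrite leq_pmull.
have H4 : ((s.-1 * t.-1)%N%:R : R) <= q ^+ 2.
  by rewrite q2 ler_nat leq_mul // leq_pred.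
have cb2 : 0 <= (c - b) ^+ 2 by rewrite sqr_ge0.
have X : 1 < ((c - b) * q) ^+ 2.
  rewrite exprMn; nra.
have Y : 1 < (c - b) * q.
  have : 0 <= (c - b) * q by rewrite mulr_ge0 // ?subr_ge0 ?ltW.
  move: X; rewrite expr2 => ? ?; nra.
have Z : b * q < l by nra.
have bq0 : 0 <= b * q by rewrite mulr_ge0 // ltW.
move: H4; set D := ((s.-1 * t.-1)%N%:R : R) => H4.
have : b ^+ 2 * D <= b ^+ 2 * q ^+ 2 by rewrite ler_wpM2l // sqr_ge0.
rewrite -exprMn => H5; apply: (le_trans H5); rewrite !expr2; nra.
Qed.

End Real.
Section Ana.
Variable R : realType.
Local Open Scope ereal_scope.
Implicit Types u : (\bar R)^nat.

Lemma liminf_E u : limn_einf u = ereal_sup (range (einfs u)).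
Proof. by rewrite limn_einf_lim; apply/cvg_lim => //; exact: cvg_einfs_sup. Qed.

Lemma limsup_E u : limn_esup u = ereal_inf (range (esups u)).
Proof. by rewrite limn_esup_lim; apply/cvg_lim => //; exact: cvg_esups_inf. Qed.

Lemma liminf_gt u a : a < limn_einf u -> exists N, forall k, (N <= k)%N -> a < u k.
Proof.
rewrite liminf_E => /ereal_sup_gt [_ [N _ <-]] h; exists N => k Nk.
apply: (lt_le_trans h); apply: ereal_inf_lbound; by exists k.
Qed.

Lemma liminf_ge u x N : (forall k, (N <= k)%N -> x <= u k) -> x <= limn_einf u.
Proof.
move=> h; rewrite liminf_E; apply: (@le_trans _ _ (einfs u N)); last first.
  by apply: ereal_sup_ubound; exists N.
by apply: le_ereal_inf_tmp => _ [k Nk <-]; apply: h.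
Qed.

Lemma limsup_gt u a : a < limn_esup u -> forall N, exists k, (N <= k)%N /\ a < u k.
Proof.
rewrite limsup_E => h N.
have : a < esups u N.
  by apply: (lt_le_trans h); apply: ereal_inf_lbound; exists N.
by case/ereal_sup_gt => _ [k Nk <-] hk; exists k.
Qed.

Lemma limsup_ge u x : (forall N, exists k, (N <= k)%N /\ x <= u k) -> x <= limn_esup u.
Proof.
move=> h; rewrite limsup_E; apply: le_ereal_inf_tmp => _ [N _ <-].
have [k [Nk hk]] := h N; apply: (le_trans hk); apply: ereal_sup_ubound; by exists k.
Qed.

Lemma key (L G : \bar R) : 0 <= L -> 0 <= G ->
  (forall a : R, (0 < a)%R -> a%:E < L -> (a ^+ 2)%:E <= G) -> L * L <= G.
Proof.
move=> L0 G0 h; case: L L0 h => [r| |] //; rewrite ?lee_fin => r0 h.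
- case: G G0 h => [g| |] //; rewrite ?lee_fin => g0 h; last by rewrite leey.
  rewrite leNgt; apply/negP => gr.
  have hy : (Num.sqrt g ^+ 2 = g)%R by rewrite sqr_sqrtr.
  move: (sqrtr_ge0 g) hy; set y := Num.sqrt g => y0 hy.
  have sg : (y < r)%R.
    rewrite -(@ltr_pXn2r _ 2) ?nnegrE // hy expr2 //.
  have a0 : (0 < (y + r) / 2)%R by lra.
  have := h _ a0; rewrite lte_fin lee_fin => /(_ ltac:(lra)) H.
  have P : (0 < ((y + r) / 2 - y) * ((y + r) / 2 + y))%R.
    by apply: mulr_gt0; lra.
  move: H; rewrite -hy !expr2 => H; nra.
- case: G G0 h => [g| |] //; rewrite ?lee_fin => g0 h.
  have hy : (Num.sqrt g ^+ 2 = g)%R by rewrite sqr_sqrtr.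
  move: (sqrtr_ge0 g) hy; set y := Num.sqrt g => y0 hy.
  have a0 : (0 < y + 1)%R by lra.
  have := h _ a0 (ltry _); rewrite lee_fin -hy !expr2 => H.
  have P : (0 < (y + 1 - y) * (y + 1 + y))%R by apply: mulr_gt0; lra.
  clear r0 h; exfalso; nra.
Qed.

End Ana.
End Aux.
Import Aux.
Lemma gfun_ge0 (R : realType) n : (0 <= gfun R n)%R.
Proof.
rewrite /gfun mulr_ge0 ?divr_ge0 ?sqr_ge0 ?ler0n //.
by rewrite /fchi bigmax_ge_id.
Qed.

Local Open Scope ereal_scope.

Theorem theorem2p1 (R : realType) :
  Lconst R * Lconst R <= limn_einf (fun n : nat => (gfun R n)%:E) /\
  Mconst R * Mconst R <= limn_esup (fun n : nat => (gfun R n)%:E).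
Proof.
have G1 : 0 <= limn_einf (fun n : nat => (gfun R n)%:E).
  by apply: (@liminf_ge _ _ _ 0) => k _; rewrite lee_fin gfun_ge0.
have G2 : 0 <= limn_esup (fun n : nat => (gfun R n)%:E).
  exact: (le_trans G1 (limn_einf_sup _)).
split.
- apply: key => //.
    apply: (@liminf_ge _ _ _ 0) => k _; rewrite lee_fin.
    by rewrite divr_ge0 ?log2_nat_ge0 ?ler0n.
  move=> a a0 aL.
  have [N hN] := liminf_gt aL.
  have [N' hN'] := part1 a0 (fun k Hk => ltac:(have := hN k Hk; rewrite lte_fin; exact)).
  by apply: (@liminf_ge _ _ _ N') => n hn; rewrite lee_fin; apply: hN'.
- apply: key => //.
    apply: limsup_ge => N; exists N; split => //.
    by rewrite lee_fin bigmax_ge_id.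
  move=> a a0 aM.
  have [c [ac cM]] : exists c : R, (a < c)%R /\ c%:E < Mconst R.
    move: aM; case: (Mconst R) => [r| |] //.
      by rewrite !lte_fin => ar; exists ((a + r) / 2)%R; split; rewrite ?lte_fin; lra.
    move=> _; exists (a + 1)%R; split; first lra.
    exact: ltey.
  have hf := limsup_gt cM.
  apply: limsup_ge.
  apply: (part2 a0 ac) => N.
  have [t [Nt]] := hf N; rewrite lte_fin => hct.
  have c0 : (0 < c)%R by lra.
  case: (pselect (exists s, (1 <= s <= t)%N /\
     (c < log2 ((ramsey s t)%:R : R) / Num.sqrt ((s * t)%:R))%R)) => [[s [hs1 hs2]]|Hn].
    exists t, s; split => //; split => //.
    case/andP: hs1 => s1 st.
    have sq0 : (0 < Num.sqrt ((s * t)%N%:R : R))%R.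
      by rewrite sqrtr_gt0 ltr0n muln_gt0 s1 (leq_trans s1 st).
    by move: hs2; rewrite ltr_pdivlMr.
  exfalso; move: hct; apply/negP; rewrite -leNgt big_nat_cond.
  apply: bigmax_le; first by lra.
  move=> i /andP[/andP[i1 it] _]; rewrite leNgt; apply/negP => ci; apply: Hn.
  by exists i; split => //; rewrite i1.
Qed.
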